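(* Let $i\in\{1,\dots,d\}$ and $I\subseteq\{1,\dots,d\}$ with $|I|=i$, and let $L_I=\operatorname{span}\{e_k:k\in I\}$. Then, restricting to the coordinates in $I$, $T_d\cap L_I=S\big(\tfrac{1}{d-i+1},1,\dots,1\big)\subseteq\mathbb{R}^I$, where the weight vector has $i+1$ entries.
   Context: $T_d=\operatorname{conv}(-\mathbb{1}_d,e_1,\dots,e_d)\subseteq\mathbb{R}^d$ is the standard terminal simplex. For $\omega=(\omega_0,\dots,\omega_n)\in\mathbb{R}^{n+1}_{>0}$, $S(\omega)=\operatorname{conv}(-\omega_0\mathbb{1}_n,\omega_1e_1,\dots,\omega_ne_n)\subseteq\mathbb{R}^n$. *)

(* Defs.v *)
From HB Require Import structures.
From mathcomp Require Import all_boot all_order all_algebra.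
Set Implicit Arguments. Unset Strict Implicit. Unset Printing Implicit Defensive.
Import Order.TTheory GRing.Theory Num.Theory.
Local Open Scope ring_scope.

(* Points of R^n are row vectors 'rV[R]_n; coordinates are 0-indexed,
   so the paper's e_1..e_n are delta_mx 0 j for j : 'I_n. *)

Definition ebasis (R : realFieldType) (n : nat) (j : 'I_n) : 'rV[R]_n :=
  delta_mx 0 j.

Definition conv (R : realFieldType) (n k : nat) (v : 'I_k -> 'rV[R]_n)
  (x : 'rV[R]_n) : Prop :=
  exists lam : 'I_k -> R,
    (forall j, 0 <= lam j) /\ \sum_(j < k) lam j = 1 /\
    x = \sum_(j < k) lam j *: v j.

(* vertices of S(omega): index 0 |-> -omega_0 * 1_n, index j+1 |-> omega_{j+1} e_{j+1} *)
Definition Svert (R : realFieldType) (n : nat) (w : 'I_n.+1 -> R)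
  (k : 'I_n.+1) : 'rV[R]_n :=
  match unlift ord0 k with
  | Some j => w k *: ebasis R j
  | None => - (w ord0 *: const_mx 1)
  end.

Definition Ssimplex (R : realFieldType) (n : nat) (w : 'I_n.+1 -> R) :
  'rV[R]_n -> Prop := conv (Svert w).

Definition Tvert (R : realFieldType) (d : nat) (k : 'I_d.+1) : 'rV[R]_d :=
  match unlift ord0 k with
  | Some j => ebasis R j
  | None => - const_mx 1
  end.

Definition Tsimplex (R : realFieldType) (d : nat) : 'rV[R]_d -> Prop :=
  conv (@Tvert R d).

Definition coordspace (R : realFieldType) (d : nat) (I : {set 'I_d}) :
  {vspace 'rV[R]_d} :=
  (<<[seq ebasis R k | k <- enum I]>>)%VS.

(* restriction of x in R^d to the coordinates in I (listed in increasing
   order), as a vector of R^i where #|I| = i *)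
Definition restrict (R : realFieldType) (d i : nat) (I : {set 'I_d})
  (hI : #|I| = i) (x : 'rV[R]_d) : 'rV[R]_i :=
  \row_(j < i) x 0 (enum_val (cast_ord (esym hI) j)).

Definition wI (R : realFieldType) (d i : nat) (k : 'I_i.+1) : R :=
  if k == ord0 then ((d - i + 1)%:R)^-1 else 1.

(* Main.v *)
Require Import Defs.
From HB Require Import structures.
From mathcomp Require Import all_boot all_order all_algebra.
From mathcomp Require Import lra.
Import Order.TTheory GRing.Theory Num.Theory.
Local Open Scope ring_scope.

Definition Vv (R : realFieldType) (n : nat) (a : R) (k : 'I_n.+1) : 'rV[R]_n :=
  match unlift ord0 k with
  | Some j => ebasis R j
  | None => - (a *: const_mx 1)
  end.

Arguments Vv {R n}.

Lemma conv_ext (R : realFieldType) n k (v w : 'I_k -> 'rV[R]_n) y :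
  (forall j, v j = w j) -> conv v y <-> conv w y.
Proof.
move=> e; split => -[l [h1 [h2 h3]]]; exists l; do 2!split => //;
  by rewrite h3; apply: eq_bigr => j _; rewrite e.
Qed.

Lemma sum_delta (R : realFieldType) n (c : 'I_n -> R) :
  \sum_j c j *: ebasis R j = \row_j c j.
Proof.
by rewrite [RHS]row_sum_delta; apply: eq_bigr => j _; rewrite mxE.
Qed.

Lemma convV (R : realFieldType) n (a : R) (y : 'rV[R]_n) :
  conv (Vv a) y <-> exists t, [/\ 0 <= t, forall j, 0 <= y 0 j + a * t
     & t + \sum_j (y 0 j + a * t) = 1].
Proof.
split.
  move=> [l [l0 [ls ->]]]; exists (l ord0).
  rewrite big_ord_recl /Vv unlift_none.
  under eq_bigr do rewrite liftK.
  rewrite sum_delta.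
  have E : forall j, (l ord0 *: - (a *: const_mx 1) + \row_j0 l (lift ord0 j0) : 'rV[R]_n) 0 j + a * l ord0
      = l (lift ord0 j).
    by move=> j; rewrite !mxE; lra.
  split => //; first by move=> j; rewrite E.
  under eq_bigr do rewrite E.
  by rewrite -big_ord_recl.
move=> [t [t0 tj ts]].
exists (fun k => match unlift ord0 k with Some j => y 0 j + a * t | None => t end).
split; first by move=> k; case: (unlift ord0 k).
rewrite big_ord_recl unlift_none.
under eq_bigr do rewrite liftK.
split => //.
rewrite big_ord_recl /Vv unlift_none.
under eq_bigr do rewrite liftK.
rewrite sum_delta; apply/rowP => j; rewrite !mxE; lra.
Qed.
Local Open Scope ring_scope.

Set Implicit Arguments. Unset Strict Implicit.
Lemma sum_I (R : realFieldType) d i (I : {set 'I_d}) (hI : #|I| = i) (F : 'I_d -> R) :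
  \sum_(k in I) F k = \sum_(j < i) F (enum_val (cast_ord (esym hI) j)).
Proof. subst i; rewrite big_enum_val; apply: eq_bigr => j _; by rewrite cast_ord_id. Qed.

Lemma sum_supp (R : realFieldType) d (I : {set 'I_d}) (x : 'rV[R]_d) :
  (forall k, k \notin I -> x 0 k = 0) -> \sum_k x 0 k = \sum_(k in I) x 0 k.
Proof.
move=> h; rewrite (bigID (fun k => k \in I)) /= [X in _ + X]big1 ?addr0 //.
Qed.

Lemma span_supp (R : realFieldType) d (I : {set 'I_d}) (x : 'rV[R]_d) :
  x \in coordspace R I -> forall k, k \notin I -> x 0 k = 0.
Proof.
move=> hx k kI.
have := coord_span (X := in_tuple [seq ebasis R k | k <- enum I]) hx.
move=> ->; rewrite summxE big1 // => j _.
rewrite mxE /=.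
have js : (j < size (enum I))%N by rewrite -(size_map (@ebasis R d)) ltn_ord.
rewrite (nth_map k) // /ebasis mxE /=.
have : nth k (enum I) j \in I by rewrite -mem_enum mem_nth.
case: eqP => [E | _]; first by rewrite -E (negbTE kI).
by rewrite mulr0.
Qed.

Lemma S_V (R : realFieldType) d i (y : 'rV[R]_i) :
  Ssimplex (@wI R d i) y <-> conv (Vv (@wI R d i ord0)) y.
Proof.
apply: conv_ext => k; rewrite /Svert /Vv; case: unliftP => [j -> | _] //.
by rewrite /wI /= scale1r.
Qed.

Lemma T_V (R : realFieldType) d (x : 'rV[R]_d) :
  Tsimplex x <-> conv (Vv 1) x.
Proof.
apply: conv_ext => k; rewrite /Tvert /Vv; case: unliftP => [j _ | _] //.
by rewrite scale1r.
Qed.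
Unset Implicit Arguments. Set Strict Implicit.

Theorem corollary5p5 (R : realFieldType) (d i : nat) (I : {set 'I_d})
  (hi1 : (1 <= i)%N) (hid : (i <= d)%N) (hI : #|I| = i) :
  forall y : 'rV[R]_i,
    Ssimplex (@wI R d i) y <->
    exists x : 'rV[R]_d,
      [/\ Tsimplex x, x \in coordspace R I & restrict hI x = y].
Proof.
move=> y; rewrite S_V convV.
set w := @wI R d i ord0.
set m1 : R := (d - i + 1)%:R.
have m1p : 0 < m1 by rewrite /m1 ltr0n addn1.
have e1 : w * m1 = 1 by rewrite /w /wI eqxx mulVf // gt_eqF.
have e2 : (d%:R + 1 : R) = m1 + i%:R.
  by rewrite /m1 [RHS]addrC -natrD addnA [(i + _)%N]addnC subnK // natrD.
set f := fun j : 'I_i => enum_val (cast_ord (esym hI) j).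
have fI : forall j, f j \in I by move=> j; exact: enum_valP.
have finj : injective f.
  by move=> a b /enum_val_inj /cast_ord_inj.
have sumd : forall n (s : R), \sum_(k < n) s = s * n%:R.
  by move=> n s; rewrite sumr_const card_ord mulr_natr.
split.
  move=> [t [t0 tj ts]].
  set x : 'rV[R]_d := \sum_j y 0 j *: ebasis R (f j).
  have xe : forall k, x 0 k = \sum_j y 0 j * (f j == k)%:R.
    move=> k; rewrite summxE; apply: eq_bigr => j _; rewrite !mxE eqxx.
    by rewrite eq_sym.
  have xf : forall j, x 0 (f j) = y 0 j.
    move=> j; rewrite xe (bigD1 j) //= eqxx mulr1 big1 ?addr0 //.
    by move=> j' /negbTE nj; rewrite (inj_eq finj) nj mulr0.
  have x0 : forall k, k \notin I -> x 0 k = 0.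
    move=> k kI; rewrite xe big1 // => j _.
    by case: eqP => [E|_]; [move: (fI j); rewrite E (negbTE kI) | rewrite mulr0].
  have sx : \sum_k x 0 k = \sum_j y 0 j.
    by rewrite (sum_supp x0) (sum_I hI); apply: eq_bigr => j _; rewrite xf.
  exists x; split.
  - rewrite T_V convV; exists (w * t); split.
    + by rewrite mulr_ge0 // /w /wI eqxx invr_ge0 ler0n.
    + move=> k; case kI: (k \in I).
        have [j ->] : exists j, k = f j.
          exists (cast_ord hI (enum_rank_in kI k)).
          by rewrite /f cast_ordK enum_rankK_in.
        by rewrite xf mul1r.
      by rewrite x0 ?kI // add0r mul1r mulr_ge0 // /w /wI eqxx invr_ge0 ler0n.
    + rewrite big_split /= sx sumd.
      move: ts; rewrite big_split /= sumd.
      have : w * t * (d%:R + 1) = t + w * t * i%:R.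
        by rewrite e2 mulrDr -mulrA [t * m1]mulrC mulrA e1 mul1r.
      rewrite !mul1r.
      lra.
  - apply: memv_suml => j _; apply: memvZ; apply: memv_span.
    by apply: map_f; rewrite mem_enum.
  - by apply/rowP => j; rewrite mxE xf.
move=> [x [hT hx <-]].
move: hT; rewrite T_V convV => -[s [s0 sk ss]].
have x0 := span_supp hx.
have sx : \sum_k x 0 k = \sum_j x 0 (f j) by rewrite (sum_supp x0) (sum_I hI).
have rf : forall j, restrict hI x 0 j = x 0 (f j) by move=> j; rewrite mxE.
exists (m1 * s); split.
- by rewrite mulr_ge0 // ltW.
- by move=> j; rewrite rf mulrA e1 mul1r; have := sk (f j); rewrite mul1r.
- under eq_bigr do rewrite rf mulrA e1 mul1r.
  move: ss; rewrite !big_split /= sx !sumd !mul1r.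
  have : m1 * s + s * i%:R = s * (d%:R + 1) by rewrite e2 mulrDr mulrC.
  lra.
Qed.
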